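(* Let $G$ be a group, $\mathcal F$ a family of subgroups and $H\le G$. Let $L,P$ be finitely generated $\mathbb ZG$-modules with $P\subseteq L$, and $M,Q$ finitely generated $\mathbb ZH$-modules with $Q\subseteq M$, such that, as $\mathbb ZH$-modules, $M\subseteq L$ and $Q\subseteq P$, with all these inclusions compatible (the square $Q\hookrightarrow M\hookrightarrow L$, $Q\hookrightarrow P\hookrightarrow L$ commutes). Let $\|\cdot\|_L,\|\cdot\|_M$ be filling norms on $L$ and $M$, and suppose there is an integer $C_0\ge1$ with $\|x\|_L\le C_0\|x\|_M$ for all $x\in M$. Suppose $P$ is $\mathcal F$-free and there is a $\mathbb ZH$-homomorphism $\rho:P\to Q$ with $\rho\circ\imath=\mathrm{Id}_Q$, where $\imath:Q\to P$ is the inclusion. Then $\mathrm{Dist}^M_Q\preceq\mathrm{Dist}^L_P$.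
   Context: Filling norms: for a free $\mathbb ZG$-module with basis $B$, $\|\cdot\|_1$ is the $\ell_1$-norm for the $\mathbb Z$-basis $\{gb\}$; for a finitely generated $\mathbb ZG$-module $N$ and surjection $\eta:F\to N$ from a finitely generated based free module, $\|n\|_\eta=\min\{\|x\|_1:\eta(x)=n\}$. The distortion of a finitely generated submodule $P$ of a finitely generated $\mathbb ZG$-module $L$ is $\mathrm{Dist}^L_P(k)=\max\{\|\gamma\|_P:\gamma\in P,\|\gamma\|_L\le k\}$ (possibly $\infty$) for chosen filling norms $\|\cdot\|_P,\|\cdot\|_L$; similarly over $\mathbb ZH$. A $\mathbb ZG$-module is $\mathcal F$-free if it is isomorphic to $\mathbb Z[S]$ for a $G$-set $S$ all of whose isotropy groups lie in $\mathcal F$. $f\preceq g$ means $\exists C>0$: $f(n)\le Cg(Cn+C)+Cn+C$ for all $n$. *)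

(* Defs.v *)
From HB Require Import structures.
From mathcomp Require Import all_boot all_order all_algebra.
From Stdlib Require Import ClassicalEpsilon.
Set Implicit Arguments. Unset Strict Implicit. Unset Printing Implicit Defensive.
Import GRing.Theory.
Local Open Scope ring_scope.

Section Defs.
Variables (G : groupType) (V : zmodType).

Definition is_Gmodule (act : G -> V -> V) : Prop :=
  [/\ (forall g x y, act g (x - y) = act g x - act g y),
      (forall x, act 1%g x = x) &
      (forall g h x, act (g * h)%g x = act g (act h x))].

Definition submod (A : pred G) (act : G -> V -> V) (N : V -> Prop) : Prop :=
  [/\ N 0,
      (forall x y, N x -> N y -> N (x - y)) &
      (forall g x, A g -> N x -> N (act g x))].

(* A formal element  sum_k c_k g_k b_k  of the based free ZA-module on a
   finite basis, the basis element b being sent to the generator b of N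
   (this is eta).  Terms are (c, g, b). *)
Definition formal_over (A : pred G) (gens : seq V) (s : seq (int * G * V)) : Prop :=
  forall t, List.In t s -> A t.1.2 /\ t.2 \in gens.

Definition fsum (act : G -> V -> V) (s : seq (int * G * V)) : V :=
  \sum_(t <- s) (act t.1.2 t.2) *~ t.1.1.

Definition l1 (s : seq (int * G * V)) : nat := (\sum_(t <- s) absz t.1.1)%N.

Definition fin_gen (A : pred G) (act : G -> V -> V) (N : V -> Prop) : Prop :=
  exists gens : seq V, (forall v, v \in gens -> N v) /\
    forall x, N x -> exists s, formal_over A gens s /\ fsum act s = x.

(* nrm is the filling norm ||.||_eta on N for the surjection eta from the
   finitely generated based free ZA-module whose basis goes to gens *)
Definition filling_norm (A : pred G) (act : G -> V -> V) (N : V -> Prop)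
    (nrm : V -> nat) : Prop :=
  exists gens : seq V, (forall v, v \in gens -> N v) /\
    forall x, N x ->
      (exists s, [/\ formal_over A gens s, fsum act s = x & l1 s = nrm x]) /\
      (forall s, formal_over A gens s -> fsum act s = x -> (nrm x <= l1 s)%N).

(* P is F-free: P is ZG-isomorphic to Z[S] for a G-set S with all isotropy
   groups in F; phi is the image of the Z-basis S of Z[S]. *)
Definition Ffree (F : pred G -> Prop) (act : G -> V -> V) (P : V -> Prop) : Prop :=
  exists (S : eqType) (actS : G -> S -> S) (phi : S -> V),
    [/\ (forall s, actS 1%g s = s) /\ (forall g h s, actS (g * h)%g s = actS g (actS h s)),
        (forall s, F [pred g | actS g s == s]) /\ (forall g s, phi (actS g s) = act g (phi s)),
        (forall s, P (phi s)),
        (forall x, P x -> exists c : seq (int * S), x = \sum_(t <- c) phi t.2 *~ t.1) &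
        (forall c : seq (int * S), \sum_(t <- c) phi t.2 *~ t.1 = 0 ->
           forall s0, \sum_(t <- c | t.2 == s0) t.1 = 0)].

(* Dist^L_P(k) = max { ||g||_P : g in P, ||g||_L <= k }, None = infinity *)
Definition Dist (P : V -> Prop) (nP nL : V -> nat) (k : nat) : option nat :=
  let bnd b := forall x, P x -> (nL x <= k)%N -> (nP x <= b)%N in
  match excluded_middle_informative (exists b, bnd b) with
  | left _ => Some (epsilon (inhabits 0%N)
                 (fun b => bnd b /\ exists x, [/\ P x, (nL x <= k)%N & nP x = b]))
  | right _ => None
  end.
End Defs.

(* f <= g : exists C > 0, f(n) <= C g(Cn+C) + Cn + C for all n (None = infinity) *)
Definition dom_le (f g : nat -> option nat) : Prop :=
  exists C : nat, (0 < C)%N /\ forall n,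
    match g (C * n + C)%N with
    | None => True
    | Some b => exists a, f n = Some a /\ (a <= C * b + C * n + C)%N
    end.

(* Main.v *)
Require Import Defs.
From HB Require Import structures.
From mathcomp Require Import all_boot all_order all_algebra.
From Stdlib Require Import ClassicalEpsilon.
Set Implicit Arguments. Unset Strict Implicit. Unset Printing Implicit Defensive.
Import GRing.Theory.
Local Open Scope ring_scope.

Lemma NN (V : zmodType) (N : V -> Prop) :
  N 0 -> (forall x y, N x -> N y -> N (x - y)) -> forall x, N x -> N (- x).
Proof. by move=> N0 NB x Nx; rewrite -sub0r; apply: NB. Qed.

Lemma ND (V : zmodType) (N : V -> Prop) :
  N 0 -> (forall x y, N x -> N y -> N (x - y)) -> forall x y, N x -> N y -> N (x + y).
Proof.
move=> N0 NB x y Nx Ny; have := NB _ _ Nx (NN N0 NB Ny); by rewrite opprK.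
Qed.

Lemma NMz (V : zmodType) (N : V -> Prop) :
  N 0 -> (forall x y, N x -> N y -> N (x - y)) -> forall x n, N x -> N (x *~ n).
Proof.
move=> N0 NB x n Nx.
have Hn : forall k : nat, N (x *+ k).
  by elim=> [|k IH]; rewrite ?mulr0n // mulrS; apply: ND.
case: n => k; first exact: Hn.
by rewrite NegzE mulrNz; apply: (NN N0 NB); exact: Hn.
Qed.

Lemma Nsum (V : zmodType) (N : V -> Prop) (I : Type) (r : seq I) (Pp : pred I) (F : I -> V) :
  N 0 -> (forall x y, N x -> N y -> N (x - y)) ->
  (forall i, List.In i r -> N (F i)) -> N (\sum_(i <- r | Pp i) F i).
Proof.
move=> N0 NB; elim: r => [|i r IH] H; first by rewrite big_nil.
rewrite big_cons; have Hi : N (F i) by apply: H; left.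
have Hr : N (\sum_(i <- r | Pp i) F i) by apply: IH => j Hj; apply: H; right.
by case: (Pp i) => //; apply: ND.
Qed.

Lemma f0 (V W : zmodType) (N : V -> Prop) (f : V -> W) :
  N 0 -> (forall x y, N x -> N y -> f (x - y) = f x - f y) -> f 0 = 0.
Proof. by move=> N0 fB; have := fB 0 0 N0 N0; rewrite !subrr. Qed.

Lemma fN (V W : zmodType) (N : V -> Prop) (f : V -> W) :
  N 0 -> (forall x y, N x -> N y -> f (x - y) = f x - f y) ->
  forall x, N x -> f (- x) = - f x.
Proof.
move=> N0 fB x Nx; have := fB 0 x N0 Nx; rewrite sub0r => ->.
by rewrite (f0 N0 fB) sub0r.
Qed.

Lemma fD (V W : zmodType) (N : V -> Prop) (f : V -> W) :
  N 0 -> (forall x y, N x -> N y -> N (x - y)) ->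
  (forall x y, N x -> N y -> f (x - y) = f x - f y) ->
  forall x y, N x -> N y -> f (x + y) = f x + f y.
Proof.
move=> N0 NB fB x y Nx Ny; have := fB x (- y) Nx (NN N0 NB Ny).
by rewrite opprK => ->; rewrite (fN N0 fB Ny) opprK.
Qed.

Lemma fMz (V W : zmodType) (N : V -> Prop) (f : V -> W) :
  N 0 -> (forall x y, N x -> N y -> N (x - y)) ->
  (forall x y, N x -> N y -> f (x - y) = f x - f y) ->
  forall x n, N x -> f (x *~ n) = f x *~ n.
Proof.
move=> N0 NB fB x n Nx.
have Hn : forall k : nat, f (x *+ k) = f x *+ k.
  elim=> [|k IH]; first by rewrite !mulr0n (f0 N0 fB).
  rewrite !mulrS (fD N0 NB fB) ?IH //.
  by have := NMz N0 NB k%:Z Nx.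
case: n => k; first exact: Hn.
rewrite !NegzE !mulrNz (fN N0 fB); last by have := NMz N0 NB (k.+1)%:Z Nx.
by congr (- _); exact: Hn.
Qed.

Lemma f_sum (V W : zmodType) (N : V -> Prop) (f : V -> W) (I : Type) (r : seq I) (Pp : pred I) (F : I -> V) :
  N 0 -> (forall x y, N x -> N y -> N (x - y)) ->
  (forall x y, N x -> N y -> f (x - y) = f x - f y) ->
  (forall i, List.In i r -> N (F i)) ->
  f (\sum_(i <- r | Pp i) F i) = \sum_(i <- r | Pp i) f (F i).
Proof.
move=> N0 NB fB; elim: r => [|i r IH] H; first by rewrite !big_nil (f0 N0 fB).
rewrite !big_cons; have Hi : N (F i) by apply: H; left.
have H' : forall j, List.In j r -> N (F j) by move=> j Hj; apply: H; right.
case: (Pp i); last exact: IH.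
by rewrite (fD N0 NB fB) ?IH //; apply: Nsum.
Qed.


Definition FN (G : groupType) (V : zmodType) (A : pred G) (act : G -> V -> V)
  (N : V -> Prop) (nrm : V -> nat) (gens : seq V) :=
  forall x, N x ->
      (exists s, [/\ formal_over A gens s, fsum act s = x & l1 s = nrm x]) /\
      (forall s, formal_over A gens s -> fsum act s = x -> (nrm x <= l1 s)%N).

Lemma act_B (G : groupType) (V : zmodType) (act : G -> V -> V) g :
  is_Gmodule act -> forall x y : V, (fun _ => True) x -> (fun _ => True) y ->
  act g (x - y) = act g x - act g y.
Proof. by case=> h _ _ x y _ _; apply: h. Qed.

Lemma act_sum (G : groupType) (V : zmodType) (act : G -> V -> V) g (I : Type) (r : seq I) (Pp : pred I) (F : I -> V) :
  is_Gmodule act -> act g (\sum_(i <- r | Pp i) F i) = \sum_(i <- r | Pp i) act g (F i).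
Proof.
move=> hG; apply: (f_sum (N := fun _ => True)) => //; exact: act_B.
Qed.

Lemma act_Mz (G : groupType) (V : zmodType) (act : G -> V -> V) g x n :
  is_Gmodule act -> act g (x *~ n) = act g x *~ n.
Proof.
move=> hG; apply: (fMz (N := fun _ => True)) => //; exact: act_B.
Qed.

Lemma fsum_cat (G : groupType) (V : zmodType) (act : G -> V -> V) s1 s2 :
  fsum act (s1 ++ s2) = fsum act s1 + fsum act s2.
Proof. by rewrite /fsum big_cat. Qed.

Lemma l1_cat (G : groupType) (V : zmodType) (s1 s2 : seq (int * G * V)) :
  l1 (s1 ++ s2) = (l1 s1 + l1 s2)%N.
Proof. by rewrite /l1 big_cat. Qed.

Definition scl (G : groupType) (V : zmodType) (n : int) (s : seq (int * G * V)) :=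
  [seq (n * t.1.1, t.1.2, t.2) | t <- s].
Definition trl (G : groupType) (V : zmodType) (h : G) (s : seq (int * G * V)) :=
  [seq (t.1.1, (h * t.1.2)%g, t.2) | t <- s].

Lemma fsum_scl (G : groupType) (V : zmodType) (act : G -> V -> V) n s :
  fsum act (scl n s) = fsum act s *~ n.
Proof.
rewrite /fsum /scl big_map mulrz_suml; apply: eq_bigr => t _ /=.
by rewrite mulrC mulrzA.
Qed.

Lemma l1_scl (G : groupType) (V : zmodType) n (s : seq (int * G * V)) :
  l1 (scl n s) = (absz n * l1 s)%N.
Proof.
rewrite /l1 /scl big_map big_distrr; apply: eq_bigr => t _ /=; exact: abszM.
Qed.

Lemma fsum_trl (G : groupType) (V : zmodType) (act : G -> V -> V) h s :
  is_Gmodule act -> fsum act (trl h s) = act h (fsum act s).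
Proof.
move=> hG; rewrite /fsum /trl big_map act_sum //; apply: eq_bigr => t _ /=.
rewrite act_Mz //; by case: hG => _ _ ->.
Qed.

Lemma l1_trl (G : groupType) (V : zmodType) h (s : seq (int * G * V)) :
  l1 (trl h s) = l1 s.
Proof. by rewrite /l1 /trl big_map. Qed.

Lemma In_map (T U : Type) (f : T -> U) (s : seq T) u :
  List.In u (map f s) -> exists t, List.In t s /\ u = f t.
Proof.
elim: s => [|t s IH] //= [<-|H]; first by exists t; split => //; left.
by case: (IH H) => x [Hx ->]; exists x; split => //; right.
Qed.

Lemma In_cat (T : Type) (s1 s2 : seq T) u :
  List.In u (s1 ++ s2) -> List.In u s1 \/ List.In u s2.
Proof. by move=> H; apply: List.in_app_or. Qed.

Lemma fo_cat (G : groupType) (V : zmodType) (A : pred G) (gens : seq V) s1 s2 :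
  formal_over A gens s1 -> formal_over A gens s2 -> formal_over A gens (s1 ++ s2).
Proof. by move=> h1 h2 t Ht; case: (In_cat Ht) => [/h1|/h2]. Qed.

Lemma fo_scl (G : groupType) (V : zmodType) (A : pred G) gens n (s : seq (int * G * V)) :
  formal_over A gens s -> formal_over A gens (scl n s).
Proof. by move=> h t Ht; case: (In_map Ht) => u [/h Hu ->]. Qed.

Lemma fo_trl (G : groupType) (V : zmodType) (A : pred G) gens h (s : seq (int * G * V)) :
  (forall g, A g -> A (h * g)%g) ->
  formal_over A gens s -> formal_over A gens (trl h s).
Proof. by move=> hA hs t Ht; case: (In_map Ht) => u [/hs [H1 H2] ->]; split => //=; apply: hA. Qed.

Lemma nrm0 (G : groupType) (V : zmodType) (A : pred G) (act : G -> V -> V) (N : V -> Prop) (nrm : V -> nat) (gens : seq V) :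
  FN A act N nrm gens -> N 0 -> nrm 0 = 0%N.
Proof.
move=> hF N0; have [_ h] := hF 0 N0; apply/eqP; rewrite -leqn0.
have H := h [::]; rewrite /l1 big_nil in H; apply: H; first by move=> t [].
by rewrite /fsum big_nil.
Qed.

Lemma nrm_comb (G : groupType) (V : zmodType) (A : pred G) (act : G -> V -> V) (N : V -> Prop) (nrm : V -> nat) (gens : seq V) :
  FN A act N nrm gens -> submod A act N ->
  forall d : seq (int * V), (forall t, List.In t d -> N t.2) ->
  (nrm (\sum_(t <- d) t.2 *~ t.1)%R <= \sum_(t <- d) absz t.1 * nrm t.2)%N.
Proof.
move=> hF [N0 NB _] d hd.
have Nc : N (\sum_(t <- d) t.2 *~ t.1).
  by apply: Nsum => // t /hd Nt; apply: NMz.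
suff [s [fs es ls]] : exists s, [/\ formal_over A gens s,
    fsum act s = \sum_(t <- d) t.2 *~ t.1 & (l1 s <= \sum_(t <- d) absz t.1 * nrm t.2)%N].
  by apply: leq_trans ls; apply: (proj2 (hF _ Nc)).
elim: d hd {Nc} => [|t d IH] hd.
  by exists [::]; split; [move=> t [] | rewrite /fsum !big_nil | rewrite /l1 big_nil].
have [|s [fs es ls]] := IH; first by move=> u Hu; apply: hd; right.
have [[st [fst est lst]] _] := hF t.2 (hd t (or_introl erefl)).
exists (scl t.1 st ++ s); split.
- by apply: fo_cat => //; apply: fo_scl.
- by rewrite fsum_cat fsum_scl est es big_cons.
- by rewrite l1_cat l1_scl lst big_cons leq_add2l.
Qed.

Lemma nrm_tr (G : groupType) (V : zmodType) (A : pred G) (act : G -> V -> V) (N : V -> Prop) (nrm : V -> nat) (gens : seq V) h x :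
  FN A act N nrm gens -> submod A act N -> is_Gmodule act ->
  (forall g, A g -> A (h * g)%g) -> A h -> N x -> (nrm (act h x) <= nrm x)%N.
Proof.
move=> hF [N0 NB NA] hG hA Ah Nx.
have [[s [fs es ls]] _] := hF x Nx.
rewrite -ls -(l1_trl h); apply: (proj2 (hF _ (NA _ _ Ah Nx))).
  exact: fo_trl.
by rewrite fsum_trl // es.
Qed.


Lemma ex_max (T : Type) (Pr : T -> Prop) (f : T -> nat) B :
  (exists x, Pr x) -> (forall x, Pr x -> (f x <= B)%N) ->
  exists b, (forall x, Pr x -> (f x <= b)%N) /\ exists x, Pr x /\ f x = b.
Proof.
elim: B => [|B IH] ex hB.
  exists 0%N; split => //; case: ex => x Px; exists x; split => //.
  by apply/eqP; rewrite -leqn0; apply: hB.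
case: (classic (exists x, Pr x /\ f x = B.+1)) => [h|h].
  by exists B.+1; split.
apply: IH => // x Px; have := hB x Px; rewrite leq_eqVlt => /orP [/eqP e|] //.
by exfalso; apply: h; exists x.
Qed.

Lemma Dist_le (V : zmodType) (P : V -> Prop) nP nL k b :
  Dist P nP nL k = Some b -> (exists x, P x /\ (nL x <= k)%N) ->
  forall x, P x -> (nL x <= k)%N -> (nP x <= b)%N.
Proof.
rewrite /Dist; case: excluded_middle_informative => // [[B hB]] [<-] ex.
have E : exists b, (forall x, P x -> (nL x <= k)%N -> (nP x <= b)%N) /\
           exists x, [/\ P x, (nL x <= k)%N & nP x = b].
  have [b' [h1 [x [[Px Lx] e]]]] := @ex_max _ (fun x => P x /\ (nL x <= k)%N) nP B ex
     (fun x hx => hB x hx.1 hx.2).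
  exists b'; split; first by move=> y Py Ly; apply: h1.
  by exists x.
by have [h _] := epsilon_spec (inhabits 0%N) _ E.
Qed.

Lemma Dist_some (V : zmodType) (P : V -> Prop) nP nL k B :
  (exists x, P x /\ (nL x <= k)%N) ->
  (forall x, P x -> (nL x <= k)%N -> (nP x <= B)%N) ->
  exists a, Dist P nP nL k = Some a /\ (a <= B)%N.
Proof.
move=> ex hB; rewrite /Dist; case: excluded_middle_informative => [_|[]]; last by exists B.
have E : exists b, (forall x, P x -> (nL x <= k)%N -> (nP x <= b)%N) /\
           exists x, [/\ P x, (nL x <= k)%N & nP x = b].
  have [b' [h1 [x [[Px Lx] e]]]] := @ex_max _ (fun x => P x /\ (nL x <= k)%N) nP B ex
     (fun x hx => hB x hx.1 hx.2).
  exists b'; split; first by move=> y Py Ly; apply: h1.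
  by exists x.
have [_ [x [Px Lx <-]]] := epsilon_spec (inhabits 0%N) _ E.
by eexists; split; [reflexivity| apply: hB].
Qed.

Lemma memIn (T : eqType) (x : T) (s : seq T) : x \in s -> List.In x s.
Proof.
elim: s => [|y s IH] //; rewrite in_cons => /orP [/eqP ->|/IH]; [left | right] => //.
Qed.

Lemma leq_sum_In (T : Type) (F : T -> nat) (r : seq T) x :
  List.In x r -> (F x <= \sum_(y <- r) F y)%N.
Proof.
elim: r => [|y r IH] //= [->|H]; rewrite big_cons; first exact: leq_addr.
by apply: leq_trans (IH H) _; exact: leq_addl.
Qed.

Lemma In_flatten (T : Type) (ss : seq (seq T)) u :
  List.In u (flatten ss) -> exists s, List.In s ss /\ List.In u s.
Proof.
elim: ss => [|s ss IH] //= Hu; case: (In_cat Hu) => [H|/IH [s' [H1 H2]]].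
  by exists s; split => //; left.
by exists s'; split => //; right.
Qed.


Lemma sum_if_uniq (S : eqType) (W : zmodType) (U : seq S) x (X : W) :
  uniq U -> x \in U -> \sum_(s0 <- U) (if x == s0 then X else 0) = X.
Proof.
elim: U => [|y U IH] //= /andP [yU uU]; rewrite in_cons big_cons => xin.
case: (eqVneq x y) => [exy|ne].
  rewrite exy big1_seq ?addr0 // => s0 /andP [_ s0U]; case: eqP => // e.
  by rewrite e s0U in yU.
move: xin; rewrite (negbTE ne) /= => xU.
by rewrite add0r IH.
Qed.

Lemma regroup (S : eqType) (W : zmodType) (f : S -> W) (d : seq (int * S)) (U : seq S) :
  uniq U -> (forall u, u \in d -> u.2 \in U) ->
  \sum_(u <- d) f u.2 *~ u.1 = \sum_(s0 <- U) f s0 *~ \sum_(u <- d | u.2 == s0) u.1.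
Proof.
move=> uU hd.
rewrite [RHS](eq_bigr (fun s0 => \sum_(u <- d) (if u.2 == s0 then f u.2 *~ u.1 else 0))); last first.
  move=> s0 _; rewrite mulrz_sumr big_mkcond; apply: eq_bigr => u _.
  by case: eqP => // ->.
rewrite exchange_big; apply: eq_big_seq => u ud.
by rewrite sum_if_uniq // hd.
Qed.

Lemma coef_eq (S : eqType) (V : zmodType) (phi : S -> V) d d' :
  (forall c : seq (int * S), \sum_(t <- c) phi t.2 *~ t.1 = 0 ->
           forall s0, \sum_(t <- c | t.2 == s0) t.1 = 0) ->
  \sum_(u <- d) phi u.2 *~ u.1 = \sum_(u <- d') phi u.2 *~ u.1 ->
  forall s0, \sum_(u <- d | u.2 == s0) u.1 = \sum_(u <- d' | u.2 == s0) u.1.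
Proof.
move=> indep e s0.
have := indep (d ++ [seq (- u.1, u.2) | u <- d']).
rewrite !big_cat !big_map /=.
have -> : \sum_(j <- d') phi j.2 *~ - j.1 = - \sum_(j <- d') phi j.2 *~ j.1.
  by rewrite -sumrN; apply: eq_bigr => j _; rewrite mulrNz.
rewrite e subrr => /(_ erefl s0).
by rewrite big_cat big_map /= sumrN => /eqP; rewrite subr_eq0 => /eqP.
Qed.

Lemma T_eq (S : eqType) (W : zmodType) (f : S -> W) (d d' : seq (int * S)) :
  (forall s0, \sum_(u <- d | u.2 == s0) u.1 = \sum_(u <- d' | u.2 == s0) u.1) ->
  \sum_(u <- d) f u.2 *~ u.1 = \sum_(u <- d') f u.2 *~ u.1.
Proof.
move=> ce; set U := undup [seq u.2 | u <- d ++ d'].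
have uU : uniq U by apply: undup_uniq.
rewrite (regroup f uU) ?(regroup f uU); first by apply: eq_bigr => s0 _; rewrite ce.
- by move=> u ud; rewrite mem_undup; apply: map_f; rewrite mem_cat ud orbT.
- by move=> u ud; rewrite mem_undup; apply: map_f; rewrite mem_cat ud.
Qed.


Lemma key (G : groupType) (F : pred G -> Prop) (H : {pred G}) (V : zmodType)
  (act : G -> V -> V) (P Q : V -> Prop) (nP nQ : V -> nat) (rho : V -> V)
  (gensP gensQ : seq V) :
  group_closed H -> is_Gmodule act -> submod predT act P -> submod H act Q ->
  (forall x, Q x -> P x) ->
  FN predT act P nP gensP -> (forall v, v \in gensP -> P v) ->
  FN H act Q nQ gensQ -> (forall v, v \in gensQ -> Q v) ->
  Ffree F act P ->
  (forall x, P x -> Q (rho x)) ->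
  (forall x y, P x -> P y -> rho (x - y) = rho x - rho y) ->
  (forall h x, H h -> P x -> rho (act h x) = act h (rho x)) ->
  (forall q, Q q -> rho q = q) ->
  exists K, forall q, Q q -> (nQ q <= K * nP q)%N.
Proof.
move=> gH hG [P0 PB PA] hQ QP hFP gPP hFQ gQQ
  [S [actS [phi [[aS1 aSM] [_ phiE] Pphi decomp indep]]]] rhoQ rhoB rhoH rhoId.
have [Q0 QB QA] := hQ.
pose dec (b : V) : seq (int * S) :=
  epsilon (inhabits [::]) (fun c => b = \sum_(t <- c) phi t.2 *~ t.1).
have decE : forall b, P b -> b = \sum_(t <- dec b) phi t.2 *~ t.1.
  move=> b Pb; exact: (epsilon_spec (inhabits [::])
     (fun c => b = \sum_(t <- c) phi t.2 *~ t.1) (decomp b Pb)).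
pose expand (s : seq (int * G * V)) : seq (int * S) :=
  flatten [seq [seq (u.1 * t.1.1, actS t.1.2 u.2) | u <- dec t.2] | t <- s].
have exp_cons : forall t s, expand (t :: s) =
    [seq (u.1 * t.1.1, actS t.1.2 u.2) | u <- dec t.2] ++ expand s by [].
have exp_nil : expand [::] = [::] by [].
have act_phi_sum : forall g (c : seq (int * S)),
    act g (\sum_(u <- c) phi u.2 *~ u.1) = \sum_(u <- c) phi (actS g u.2) *~ u.1.
  move=> g c; rewrite act_sum //; apply: eq_bigr => u _.
  by rewrite act_Mz // phiE.
have expE : forall s, (forall t, List.In t s -> P t.2) ->
    \sum_(u <- expand s) phi u.2 *~ u.1 = fsum act s.
  elim=> [|t s IH] hs; first by rewrite exp_nil /fsum !big_nil.
  rewrite exp_cons big_cat IH; last by move=> t' Ht'; apply: hs; right.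
  rewrite /fsum big_cons; congr (_ + _); rewrite big_map /=.
  rewrite {2}(decE t.2 (hs t (or_introl erefl))) act_phi_sum mulrz_suml.
  by apply: eq_bigr => u _; rewrite mulrzA.
pose K := (\sum_(b <- gensP) \sum_(u <- dec b) absz u.1)%N.
have expL : forall s, formal_over predT gensP s ->
    (\sum_(u <- expand s) absz u.1 <= K * l1 s)%N.
  elim=> [|t s IH] hs; first by rewrite exp_nil big_nil.
  rewrite exp_cons big_cat big_map /l1 big_cons mulnDr.
  apply: leq_add; last by apply: IH => t' Ht'; apply: hs; right.
  have -> : (\sum_(u <- dec t.2) absz (u.1 * t.1.1)%R =
             absz t.1.1 * \sum_(u <- dec t.2) absz u.1)%N.
    by rewrite big_distrr; apply: eq_bigr => u _ /=; rewrite abszM mulnC.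
  rewrite [(K * _)%N]mulnC; apply: leq_mul => //.
  apply: (@leq_sum_In _ (fun b => \sum_(u <- dec b) absz u.1)%N).
  exact: memIn (hs t (or_introl erefl)).2.
pose S0 (s : S) := exists h b u,
  [/\ H h, b \in gensQ, List.In u (dec b) & s = actS h u.2].
pose g (s : S) : V := if excluded_middle_informative (S0 s) then rho (phi s) else 0.
pose B := (\sum_(b <- gensQ) \sum_(u <- dec b) nQ (rho (phi u.2)))%N.
have gE : forall s, S0 s -> g s = rho (phi s).
  move=> s h; rewrite /g; destruct (excluded_middle_informative (S0 s)) as [h1|h1];
    [done | by exfalso; apply: h1].
have gN : forall s, ~ S0 s -> g s = 0.
  move=> s h; rewrite /g; destruct (excluded_middle_informative (S0 s)) as [h1|h1];
    [by exfalso; apply: h | done].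
have gQ : forall s, Q (g s) /\ (nQ (g s) <= B)%N.
  move=> s; case: (classic (S0 s)) => [hS|nS];
    last by rewrite gN //; split; rewrite ?(nrm0 hFQ Q0).
  rewrite gE //.
  have [h [b [u [Hh bQ uin es]]]] := hS.
  have Pu := Pphi u.2.
  rewrite es phiE rhoH //; split; first exact: QA _ _ Hh (rhoQ _ Pu).
  apply: leq_trans (nrm_tr hFQ hQ hG _ Hh (rhoQ _ Pu)) _.
    by move=> g' Hg'; apply: (group_closedM gH).
  apply: leq_trans (@leq_sum_In _ (fun u => nQ (rho (phi u.2))) _ _ uin) _.
  exact: (@leq_sum_In _ (fun b => \sum_(u <- dec b) nQ (rho (phi u.2)))%N _ _ (memIn bQ)).
exists (B * K)%N => q Qq.
have [[s [fs es ls]] _] := hFP q (QP q Qq).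
have [[r [fr er _]] _] := hFQ q Qq.
have Ps : forall t, List.In t s -> P t.2 by move=> t Ht; apply: gPP; exact: (fs t Ht).2.
have Pr : forall t, List.In t r -> P t.2 by move=> t Ht; apply: QP; apply: gQQ; exact: (fr t Ht).2.
have eqsum : \sum_(u <- expand s) phi u.2 *~ u.1 = \sum_(u <- expand r) phi u.2 *~ u.1.
  by rewrite !expE // es er.
have Teq := T_eq g (coef_eq indep eqsum).
have Tr : \sum_(u <- expand r) g u.2 *~ u.1 = q.
  transitivity (\sum_(u <- expand r) rho (phi u.2) *~ u.1).
    apply: eq_big_seq => u /memIn uin.
    have S0u : S0 u.2.
      have [l [lin ul]] := In_flatten uin.
      have [t [tr el]] := In_map lin; subst l.
      have [u' [u'in ->]] := In_map ul.
      have [Ht bt] := fr t tr.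
      by exists t.1.2, t.2, u'.
    by rewrite gE.
  rewrite -(rhoId q Qq) -er -expE // (f_sum (N := P)) //.
    by apply: eq_bigr => u _; rewrite (fMz (N := P)).
  by move=> u _; apply: NMz.
rewrite -{1}Tr -Teq.
have -> : \sum_(u <- expand s) g u.2 *~ u.1 =
          \sum_(t <- [seq (u.1, g u.2) | u <- expand s]) t.2 *~ t.1 by rewrite big_map.
apply: leq_trans (nrm_comb hFQ hQ _) _.
  by move=> t Ht; have [u [_ ->]] := In_map Ht; exact: (gQ u.2).1.
rewrite big_map -ls -mulnA.
apply: leq_trans (_ : \sum_(u <- expand s) absz u.1 * B <= _)%N.
  by apply: leq_sum => u _; rewrite leq_mul2l (gQ u.2).2 orbT.
by rewrite -big_distrl /= mulnC leq_mul2l expL ?orbT.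
Qed.

Local Close Scope ring_scope.
Unset Implicit Arguments.

Theorem mainTheorem16 (G : groupType) (F : pred G -> Prop) (H : {pred G})
  (V : zmodType) (act : G -> V -> V) (L P M Q : V -> Prop)
  (nL nM nP nQ : V -> nat) (C0 : nat) (rho : V -> V) :
  group_closed H ->
  is_Gmodule act ->
  submod predT act L -> fin_gen predT act L ->
  submod predT act P -> fin_gen predT act P ->
  (forall x, P x -> L x) ->
  submod H act M -> fin_gen H act M ->
  submod H act Q -> fin_gen H act Q ->
  (forall x, Q x -> M x) ->
  (forall x, M x -> L x) ->
  (forall x, Q x -> P x) ->
  filling_norm predT act L nL -> filling_norm H act M nM ->
  filling_norm predT act P nP -> filling_norm H act Q nQ ->
  (1 <= C0)%N -> (forall x, M x -> (nL x <= C0 * nM x)%N) ->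
  Ffree F act P ->
  (forall x, P x -> Q (rho x)) ->
  (forall x y, P x -> P y -> rho (x - y)%R = (rho x - rho y)%R) ->
  (forall h x, H h -> P x -> rho (act h x) = act h (rho x)) ->
  (forall q, Q q -> rho q = q) ->
  dom_le (Dist Q nQ nM) (Dist P nP nL).
Proof.
move=> gH hG hL _ hP _ PL hM _ hQ _ QM ML QP [gL [gLL hFL]] [gM [gMM hFM]]
  [gP [gPP hFP]] [gQ [gQQ hFQ]] C01 hC0 hF rhoQ rhoB rhoH rhoId.
have [K hK] := key gH hG hP hQ QP hFP gPP hFQ gQQ hF rhoQ rhoB rhoH rhoId.
have [L0 _ _] := hL; have [P0 _ _] := hP; have [M0 _ _] := hM; have [Q0 _ _] := hQ.
exists (C0 + K + 1)%N; split; first by rewrite addn1.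
move=> n; set C := (C0 + K + 1)%N.
case E: (Dist P nP nL (C * n + C)) => [b|] //.
have exQ : exists x, Q x /\ (nM x <= n)%N.
  by exists 0%R; split => //; rewrite (nrm0 hFM M0).
have exP : exists x, P x /\ (nL x <= C * n + C)%N.
  by exists 0%R; split => //; rewrite (nrm0 hFL L0).
have bnd : forall x, Q x -> (nM x <= n)%N -> (nQ x <= C * b)%N.
  move=> x Qx Mx.
  have Lx : (nL x <= C * n + C)%N.
    apply: leq_trans (hC0 x (QM x Qx)) _.
    apply: leq_trans (_ : C * n <= _)%N; last exact: leq_addr.
    by apply: leq_mul => //; rewrite /C -addnA leq_addr.
  have Px := Dist_le E exP (QP x Qx) Lx.
  apply: leq_trans (hK x Qx) _; apply: leq_mul => //.
  by rewrite /C addnC addnA leq_addl.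
have [a [Ea ha]] := @Dist_some _ Q nQ nM n (C * b) exQ bnd.
exists a; split => //; apply: leq_trans ha _.
by rewrite -addnA leq_addr.
Qed.
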